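(* For every $\mathcal{L}_{A}^{\Box}$-formula $\varphi$: if $\varphi$ is $\mathsf{LK(A)}$-derivable (i.e. there is a closed $\mathsf{LK(A)}$-tableau for $\varphi$), then $\varphi$ is $\mathsf{K(A)}$-valid.
   Context: $\mathcal{L}_{A}^{\Box}$-formulas are built from a countably infinite set $\mathrm{Var}$ of variables with binary $\wedge,\vee,\&,\to$, constant $\overline{0}$, unary $\Box$. A $\mathsf{K(A)}$-model $\langle W,R,V\rangle$: nonempty $W$, $R\subseteq W\times W$, $V\colon\mathrm{Var}\times W\to[-r,r]$ for some real $r\ge0$, extended by $\wedge=\min$, $\vee=\max$, $\&=+$, $V(\varphi\to\psi,x)=V(\psi,x)-V(\varphi,x)$, $V(\overline{0},x)=0$, $V(\Box\varphi,x)=\inf_{\mathbb{R}}\{V(\varphi,y):Rxy\}$ (empty infimum $=0$). $\varphi$ is $\mathsf{K(A)}$-valid if $V(\varphi,x)\ge0$ for all models and worlds. Tableau calculus $\mathsf{LK(A)}$: a labelled formula is a pair $\varphi^{k}$ of a formula and a natural number. Nodes are either labelled inequations $\Gamma\rhd\Delta$, with $\rhd\in\{>,\ge\}$ and $\Gamma,\Delta$ finite multisets of labelled formulas, or relations $rij$ with $i,j\in\mathbb{N}$. A tableau is a finite tree of nodes grown by the rules below: if the nodes above the line occur on a branch $B$, $B$ may be extended by the nodes below (all on $B$), except for the branching rules, where $B$ splits into two branches each extended by one of the listed alternatives; $\rhd$ is the same in premise and conclusion. Rules: ($\overline{0}\rhd$) from $\Gamma,\overline{0}^{i}\rhd\Delta$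 add $\Gamma\rhd\Delta$; ($\rhd\overline{0}$) from $\Gamma\rhd\overline{0}^{i},\Delta$ add $\Gamma\rhd\Delta$; ($\&\rhd$) from $\Gamma,(\varphi\&\psi)^{i}\rhd\Delta$ add $\Gamma,\varphi^{i},\psi^{i}\rhd\Delta$; ($\rhd\&$) from $\Gamma\rhd(\varphi\&\psi)^{i},\Delta$ add $\Gamma\rhd\varphi^{i},\psi^{i},\Delta$; ($\to\rhd$) from $\Gamma,(\varphi\to\psi)^{i}\rhd\Delta$ add $\Gamma,\psi^{i}\rhd\varphi^{i},\Delta$; ($\rhd\to$) from $\Gamma\rhd(\varphi\to\psi)^{i},\Delta$ add $\Gamma,\varphi^{i}\rhd\psi^{i},\Delta$; ($\wedge\rhd$) from $\Gamma,(\varphi\wedge\psi)^{i}\rhd\Delta$ add both $\Gamma,\varphi^{i}\rhd\Delta$ and $\Gamma,\psi^{i}\rhd\Delta$; ($\rhd\wedge$, branching) from $\Gamma\rhd(\varphi\wedge\psi)^{i},\Delta$ branch into $\Gamma\rhd\varphi^{i},\Delta$ or $\Gamma\rhd\psi^{i},\Delta$; ($\vee\rhd$, branching) from $\Gamma,(\varphi\vee\psi)^{i}\rhd\Delta$ branch into $\Gamma,\varphi^{i}\rhd\Delta$ or $\Gamma,\psi^{i}\rhd\Delta$; ($\rhd\vee$) from $\Gamma\rhd(\varphi\vee\psi)^{i},\Delta$ add both $\Gamma\rhd\varphi^{i},\Delta$ and $\Gamma\rhd\psi^{i},\Delta$; ($\Box\rhd$) from $rij$ and $\Gamma,(\Box\varphi)^{i}\rhd\Delta$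 add $\varphi^{j}\ge(\Box\varphi)^{i}$; ($\rhd\Box$) from $\Gamma\rhd(\Box\varphi)^{i},\Delta$ add $(\Box\varphi)^{i}\ge\varphi^{j}$ and $rij$ for a new label $j$; (ex) from $rik$ add $rkj$ for a new label $j$. The system of inequations associated to a branch consists of the labelled inequations on it containing only labelled formulas of the form $p^{i}$ ($p\in\mathrm{Var}$) or $(\Box\psi)^{i}$, each regarded as a real variable, each inequation read as an inequality between the sums of these variables (empty sum $=0$). A branch is closed if this system has no solution over $\mathbb{R}$; a tableau is closed if all its branches are closed. A tableau for $\varphi$ is one whose root is $[\,]>[\varphi^{1}]$ followed by the node $r12$; $\varphi$ is $\mathsf{LK(A)}$-derivable if there is a closed tableau for $\varphi$. *)

(* Defs.v *)
From Stdlib Require Import Reals List Permutation.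
From Coquelicot Require Import Rbar Lub.
Import ListNotations.
Open Scope R_scope.

Inductive form : Type :=
| FVar  : nat -> form
| FAnd  : form -> form -> form
| FOr   : form -> form -> form
| FAmp  : form -> form -> form
| FImp  : form -> form -> form
| FZero : form
| FBox  : form -> form.

Record model : Type := {
  world : Type;
  world_inhabited : inhabited world;
  acc : world -> world -> Prop;
  val : nat -> world -> R;
  bound : R;
  bound_nonneg : 0 <= bound;
  val_bounded : forall p x, - bound <= val p x <= bound
}.

(** Infimum in R of a set of reals, with the convention that the empty
    infimum is 0.  [Glb_Rbar E] is the infimum in the extended reals; it is
    [p_infty] exactly when [E] is empty, and [real p_infty = 0].  For the
    (bounded, nonempty) sets arising below it is the ordinary real infimum. *)
Definition inf_R (E : R -> Prop) : R := real (Glb_Rbar E).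

Fixpoint eval (M : model) (phi : form) (x : world M) : R :=
  match phi with
  | FVar p => val M p x
  | FAnd a b => Rmin (eval M a x) (eval M b x)
  | FOr a b => Rmax (eval M a x) (eval M b x)
  | FAmp a b => eval M a x + eval M b x
  | FImp a b => eval M b x - eval M a x
  | FZero => 0
  | FBox a => inf_R (fun v => exists y, acc M x y /\ v = eval M a y)
  end.

Definition KA_valid (phi : form) : Prop :=
  forall (M : model) (x : world M), 0 <= eval M phi x.

Definition lform : Type := (form * nat)%type.

Inductive rel_sym : Type := Gt | Ge.

(** Nodes: labelled inequations [Ineq G s D] (G s D, multisets represented
    as lists, rules match them up to permutation) or relations [Rel i j]. *)
Inductive node : Type :=
| Ineq : list lform -> rel_sym -> list lform -> node
| Rel  : nat -> nat -> node.

Definition branch := list node.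

Definition node_labels (n : node) : list nat :=
  match n with
  | Ineq G _ D => map snd G ++ map snd D
  | Rel i j => [i; j]
  end.

Definition fresh (j : nat) (B : branch) : Prop :=
  forall n, In n B -> ~ In j (node_labels n).

(** One rule application to branch [B]; [exts] lists the alternatives
    (one list of added nodes for non-branching rules, two for branching). *)
Inductive step (B : branch) : list (list node) -> Prop :=
| st_zero_l : forall L G s D i, In (Ineq L s D) B ->
    Permutation L ((FZero, i) :: G) -> step B [[Ineq G s D]]
| st_zero_r : forall G s L D i, In (Ineq G s L) B ->
    Permutation L ((FZero, i) :: D) -> step B [[Ineq G s D]]
| st_amp_l : forall L G s D a b i, In (Ineq L s D) B ->
    Permutation L ((FAmp a b, i) :: G) ->
    step B [[Ineq ((a, i) :: (b, i) :: G) s D]]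
| st_amp_r : forall G s L D a b i, In (Ineq G s L) B ->
    Permutation L ((FAmp a b, i) :: D) ->
    step B [[Ineq G s ((a, i) :: (b, i) :: D)]]
| st_imp_l : forall L G s D a b i, In (Ineq L s D) B ->
    Permutation L ((FImp a b, i) :: G) ->
    step B [[Ineq ((b, i) :: G) s ((a, i) :: D)]]
| st_imp_r : forall G s L D a b i, In (Ineq G s L) B ->
    Permutation L ((FImp a b, i) :: D) ->
    step B [[Ineq ((a, i) :: G) s ((b, i) :: D)]]
| st_and_l : forall L G s D a b i, In (Ineq L s D) B ->
    Permutation L ((FAnd a b, i) :: G) ->
    step B [[Ineq ((a, i) :: G) s D; Ineq ((b, i) :: G) s D]]
| st_and_r : forall G s L D a b i, In (Ineq G s L) B ->
    Permutation L ((FAnd a b, i) :: D) ->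
    step B [[Ineq G s ((a, i) :: D)]; [Ineq G s ((b, i) :: D)]]
| st_or_l : forall L G s D a b i, In (Ineq L s D) B ->
    Permutation L ((FOr a b, i) :: G) ->
    step B [[Ineq ((a, i) :: G) s D]; [Ineq ((b, i) :: G) s D]]
| st_or_r : forall G s L D a b i, In (Ineq G s L) B ->
    Permutation L ((FOr a b, i) :: D) ->
    step B [[Ineq G s ((a, i) :: D); Ineq G s ((b, i) :: D)]]
| st_box_l : forall L G s D a i j, In (Rel i j) B -> In (Ineq L s D) B ->
    Permutation L ((FBox a, i) :: G) ->
    step B [[Ineq [(a, j)] Ge [(FBox a, i)]]]
| st_box_r : forall G s L D a i j, In (Ineq G s L) B ->
    Permutation L ((FBox a, i) :: D) -> fresh j B ->
    step B [[Ineq [(FBox a, i)] Ge [(a, j)]; Rel i j]]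
| st_ex : forall i k j, In (Rel i k) B -> fresh j B ->
    step B [[Rel k j]].

Definition atomic (f : form) : Prop :=
  match f with FVar _ | FBox _ => True | _ => False end.

Definition atomic_node (n : node) : Prop :=
  match n with
  | Ineq G _ D => Forall (fun lf => atomic (fst lf)) G /\
                  Forall (fun lf => atomic (fst lf)) D
  | Rel _ _ => False
  end.

Definition sum_lf (a : form -> nat -> R) (G : list lform) : R :=
  fold_right (fun lf acc => a (fst lf) (snd lf) + acc) 0 G.

Definition sat_node (a : form -> nat -> R) (n : node) : Prop :=
  match n with
  | Ineq G Gt D => sum_lf a G > sum_lf a D
  | Ineq G Ge D => sum_lf a G >= sum_lf a D
  | Rel _ _ => True
  end.

Definition branch_closed (B : branch) : Prop :=
  ~ exists a : form -> nat -> R,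
      forall n, In n B -> atomic_node n -> sat_node a n.

Inductive closable : branch -> Prop :=
| cl_closed : forall B, branch_closed B -> closable B
| cl_step : forall B exts, step B exts ->
    (forall N, In N exts -> closable (N ++ B)) -> closable B.

Definition root_branch (phi : form) : branch :=
  [Ineq [] Gt [(phi, 1%nat)]; Rel 1 2].

Definition LKA_derivable (phi : form) : Prop := closable (root_branch phi).

(* Main.v *)
Require Import Defs.
From Stdlib Require Import Reals Lra Lia List Permutation Classical ClassicalEpsilon.
From Coquelicot Require Import Coquelicot.
Import ListNotations.
Open Scope R_scope.

Lemma lim_inv_n : is_lim_seq (fun n => / (INR n + 1)) 0.
Proof.
  assert (H : is_lim_seq (fun n => INR n + 1) p_infty).
  { eapply is_lim_seq_plus. apply is_lim_seq_INR. apply is_lim_seq_const. reflexivity. }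
  pose proof (is_lim_seq_inv _ _ H) as H2. simpl in H2. apply H2. discriminate.
Qed.

Lemma inv_n_pos : forall n, 0 < / (INR n + 1).
Proof. intros n. apply Rinv_0_lt_compat. pose proof (pos_INR n). lra. Qed.

Lemma inv_n_anti : forall m n, (m <= n)%nat -> / (INR n + 1) <= / (INR m + 1).
Proof. intros m n H. apply Rinv_le_contravar. pose proof (pos_INR m); lra.
  apply le_INR in H. lra. Qed.

Definition sincr (phi : nat -> nat) := forall n, (phi n < phi (S n))%nat.

Lemma sincr_mono phi : sincr phi -> forall m n, (m < n)%nat -> (phi m < phi n)%nat.
Proof. intros H m n Hmn. induction Hmn. apply H. specialize (H m0). lia. Qed.

Lemma sincr_ge phi : sincr phi -> forall n, (n <= phi n)%nat.
Proof. intros H n. induction n. lia. specialize (H n). lia. Qed.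

Lemma sincr_filterlim phi : sincr phi -> filterlim phi eventually eventually.
Proof. intros H P [N HN]. exists N. intros n Hn. apply HN.
  pose proof (sincr_ge phi H n). lia. Qed.

Lemma BW1 (u : nat -> R) (b : R) : (forall n, Rabs (u n) <= b) ->
  exists psi (l : R), sincr psi /\ is_lim_seq (fun n => u (psi n)) l.
Proof.
  intros Hb.
  destruct (Bolzano_Weierstrass u (fun c => -b <= c <= b) (compact_P3 _ _)) as [l Hl].
  { intros n. apply Rabs_le_between. auto. }
  assert (Hg : forall k N, exists p, (N <= p)%nat /\ Rabs (u p - l) < / (INR k + 1)).
  { intros k N. destruct (Hl (fun y => Rabs (y - l) < / (INR k + 1)) N) as [p Hp].
    exists (mkposreal _ (inv_n_pos k)). intros y Hy. exact Hy.
    exists p. exact Hp. }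
  set (g := fun k N => proj1_sig (constructive_indefinite_description _ (Hg k N))).
  assert (gs : forall k N, (N <= g k N)%nat /\ Rabs (u (g k N) - l) < / (INR k + 1)).
  { intros k N. unfold g. destruct (constructive_indefinite_description _ _). exact a. }
  set (psi := fix psi k := match k with O => g O O | S k' => g (S k') (S (psi k')) end).
  assert (Hpsi : forall k, Rabs (u (psi k) - l) < / (INR k + 1)).
  { intros [|k]; simpl; apply gs. }
  exists psi, l. split.
  - intros n. simpl. destruct (gs (S n) (S (psi n))). lia.
  - apply (is_lim_seq_le_le (fun n => l - / (INR n + 1)) _ (fun n => l + / (INR n + 1))).
    + intros n. specialize (Hpsi n). apply Rabs_lt_between in Hpsi. lra.
    + replace (Finite l) with (Finite (l - 0)) by (f_equal; lra).
      apply is_lim_seq_minus'. apply is_lim_seq_const. apply lim_inv_n.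
    + replace (Finite l) with (Finite (l + 0)) by (f_equal; lra).
      apply is_lim_seq_plus'. apply is_lim_seq_const. apply lim_inv_n.
Qed.

Definition form_eq_dec : forall a b : form, {a = b} + {a <> b}.
Proof. decide equality; apply Nat.eq_dec. Defined.

Definition lform_eq_dec : forall a b : lform, {a = b} + {a <> b}.
Proof. decide equality; [apply Nat.eq_dec | apply form_eq_dec]. Defined.

Lemma extract (A : list lform) (u : nat -> lform -> R) (bd : lform -> R) :
  (forall n k, Rabs (u n k) <= bd k) ->
  exists phi (l : lform -> R), sincr phi /\ forall k, In k A -> is_lim_seq (fun n => u (phi n) k) (l k).
Proof.
  intros Hb. induction A as [|k A IH].
  - exists (fun n => n), (fun _ => 0). split. intros n; lia. intros k [].
  - destruct IH as [phi [l [Hphi Hl]]].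
    destruct (BW1 (fun n => u (phi n) k) (bd k)) as [psi [lk [Hpsi Hlk]]].
    { intros n. apply Hb. }
    exists (fun n => phi (psi n)), (fun x => if lform_eq_dec x k then lk else l x).
    split.
    + intros n. apply sincr_mono; auto.
    + intros x Hx. destruct (lform_eq_dec x k) as [->|Hne].
      * exact Hlk.
      * destruct Hx as [Hx|Hx]. congruence.
        apply (is_lim_seq_subseq (fun n => u (phi n) x)). apply sincr_filterlim; auto.
        auto.
Qed.

Lemma sum_lim (G : list lform) (u : nat -> lform -> R) (l : lform -> R) :
  (forall k, In k G -> is_lim_seq (fun n => u n k) (l k)) ->
  is_lim_seq (fun n => sum_lf (fun f i => u n (f, i)) G) (sum_lf (fun f i => l (f, i)) G).
Proof.
  induction G as [|[f i] G IH]; intros H; simpl.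
  - apply is_lim_seq_const.
  - apply is_lim_seq_plus'. apply H. left; auto. apply IH. intros k Hk. apply H. right; auto.
Qed.

Lemma glb_fin (E : R -> Prop) e m : E e -> (forall x, E x -> m <= x) ->
  (forall x, E x -> inf_R E <= x) /\ m <= inf_R E /\
  (forall eps, 0 < eps -> exists x, E x /\ x < inf_R E + eps).
Proof.
  intros He Hm. unfold inf_R. destruct (Glb_Rbar_correct E) as [lb glb].
  assert (Hle : Rbar_le m (Glb_Rbar E)).
  { apply glb. intros x Hx. simpl. apply Hm; auto. }
  pose proof (lb e He) as Hle2.
  destruct (Glb_Rbar E) as [g| |]; simpl in *; try contradiction.
  split; [|split].
  - intros x Hx. apply (lb x Hx).
  - exact Hle.
  - intros eps Heps. apply NNPP. intros Hn.
    assert (Hlb : is_lb_Rbar E (g + eps)).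
    { intros x Hx. simpl. apply Rnot_lt_le. intros Hlt. apply Hn. exists x; split; auto. }
    pose proof (glb _ Hlb). simpl in H. lra.
Qed.

Lemma inf_R_empty (E : R -> Prop) : (forall x, ~ E x) -> inf_R E = 0.
Proof.
  intros H. unfold inf_R. rewrite (is_glb_Rbar_unique E p_infty). reflexivity.
  split. intros x Hx. exfalso; eapply H; eauto. intros b _. destruct b; simpl; auto.
Qed.

Lemma inf_R_single (E : R -> Prop) c : (forall x, E x <-> x = c) -> inf_R E = c.
Proof.
  intros H. destruct (glb_fin E c c) as [H1 [H2 _]].
  apply H; auto. intros x Hx. apply H in Hx. lra.
  assert (inf_R E <= c) by (apply H1; apply H; auto). lra.
Qed.

Lemma inf_R_ext (E1 E2 : R -> Prop) : (forall x, E1 x <-> E2 x) -> inf_R E1 = inf_R E2.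
Proof. intros H. unfold inf_R. rewrite (Glb_Rbar_eqset _ _ H). auto. Qed.

Section Ser.
Variable M : model.
Definition dead (u : world M) := forall v, ~ acc M u v.
Definition sacc (x y : option (world M)) : Prop :=
  match x, y with
  | Some u, Some v => acc M u v
  | Some u, None => dead u
  | None, None => True
  | None, Some _ => False
  end.
Definition sval (p : nat) (x : option (world M)) : R :=
  match x with Some u => val M p u | None => 0 end.
Lemma sval_bounded : forall p x, - Defs.bound M <= sval p x <= Defs.bound M.
Proof. intros p [u|]; simpl. apply val_bounded. pose proof (bound_nonneg M). lra. Qed.
Definition smodel : model :=
  {| world := option (world M); world_inhabited := inhabits None; acc := sacc;
     val := sval; Defs.bound := Defs.bound M; bound_nonneg := bound_nonneg M;
     val_bounded := sval_bounded |}.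

Lemma eval_smodel : forall f, eval smodel f None = 0 /\
  forall u, eval smodel f (Some u) = eval M f u.
Proof.
  induction f as [p|a IHa b IHb|a IHa b IHb|a IHa b IHb|a IHa b IHb| |a IHa]; simpl.
  - auto.
  - destruct IHa as [Ha1 Ha2], IHb as [Hb1 Hb2]. rewrite Ha1, Hb1.
    split. unfold Rmin; destruct Rle_dec; auto. intros u; rewrite Ha2, Hb2; auto.
  - destruct IHa as [Ha1 Ha2], IHb as [Hb1 Hb2]. rewrite Ha1, Hb1.
    split. unfold Rmax; destruct Rle_dec; auto. intros u; rewrite Ha2, Hb2; auto.
  - destruct IHa as [Ha1 Ha2], IHb as [Hb1 Hb2]. rewrite Ha1, Hb1.
    split. lra. intros u; rewrite Ha2, Hb2; auto.
  - destruct IHa as [Ha1 Ha2], IHb as [Hb1 Hb2]. rewrite Ha1, Hb1.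
    split. lra. intros u; rewrite Ha2, Hb2; auto.
  - auto.
  - destruct IHa as [Ha1 Ha2]. split.
    + apply inf_R_single. intros x; split.
      * intros [[y|] [Hy ->]]; simpl in Hy. contradiction. auto.
      * intros ->. exists None. simpl. auto.
    + intros u. destruct (classic (dead u)) as [Hd|Hd].
      * rewrite (inf_R_empty (fun v => exists y, acc M u y /\ v = eval M a y)). apply inf_R_single. intros x; split.
        -- intros [[y|] [Hy ->]]; simpl in Hy. exfalso; eapply Hd; eauto. auto.
        -- intros ->. exists None. simpl. auto.
        -- intros x [y [Hy _]]. eapply Hd; eauto.
      * apply inf_R_ext. intros x; split.
        -- intros [[y|] [Hy ->]]; simpl in Hy. exists y. rewrite Ha2. auto. contradiction.
        -- intros [y [Hy ->]]. exists (Some y). simpl. rewrite Ha2. auto.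
Qed.

Lemma smodel_serial : forall x : world smodel, exists y, acc smodel x y.
Proof.
  intros [u|]. destruct (classic (dead u)) as [Hd|Hd].
  exists None. simpl. auto.
  apply not_all_not_ex in Hd. destruct Hd as [v Hv]. exists (Some v). simpl. auto.
  exists None. simpl. auto.
Qed.
End Ser.

Fixpoint bnd (r : R) (f : form) : R :=
  match f with
  | FVar _ => r
  | FAnd a b | FOr a b | FAmp a b | FImp a b => bnd r a + bnd r b
  | FZero => 0
  | FBox a => bnd r a
  end.

Section Core.
Variable M : model.
Hypothesis ser : forall x : world M, exists y, acc M x y.

Definition succset (a : form) (x : world M) := fun v => exists y, acc M x y /\ v = eval M a y.

Lemma eval_bnd : forall f x, Rabs (eval M f x) <= bnd (Defs.bound M) f.
Proof.
  induction f as [p|a IHa b IHb|a IHa b IHb|a IHa b IHb|a IHa b IHb| |a IHa]; intros x; simpl.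
  - apply Rabs_le_between. apply val_bounded.
  - pose proof (IHa x) as A1; pose proof (IHb x) as B1.
    apply Rabs_le_between in A1; apply Rabs_le_between in B1. apply Rabs_le_between.
    unfold Rmin; destruct Rle_dec; pose proof (Rabs_pos (eval M a x)); pose proof (Rabs_pos (eval M b x));
    pose proof (IHa x); pose proof (IHb x); lra.
  - pose proof (IHa x) as A1; pose proof (IHb x) as B1.
    apply Rabs_le_between in A1; apply Rabs_le_between in B1. apply Rabs_le_between.
    unfold Rmax; destruct Rle_dec; pose proof (Rabs_pos (eval M a x)); pose proof (Rabs_pos (eval M b x));
    pose proof (IHa x); pose proof (IHb x); lra.
  - pose proof (IHa x) as A1; pose proof (IHb x) as B1.
    apply Rabs_le_between in A1; apply Rabs_le_between in B1. apply Rabs_le_between. lra.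
  - pose proof (IHa x) as A1; pose proof (IHb x) as B1.
    apply Rabs_le_between in A1; apply Rabs_le_between in B1. apply Rabs_le_between. lra.
  - rewrite Rabs_R0. pose proof (bound_nonneg M). lra.
  - destruct (ser x) as [y Hy].
    destruct (glb_fin (succset a x) (eval M a y) (- bnd (Defs.bound M) a)) as [H1 [H2 _]].
    exists y; auto.
    intros v [z [_ ->]]. pose proof (IHa z) as Z. apply Rabs_le_between in Z. lra.
    assert (inf_R (succset a x) <= eval M a y) by (apply H1; exists y; auto).
    pose proof (IHa y) as Z. apply Rabs_le_between in Z.
    apply Rabs_le_between. unfold succset in *. lra.
Qed.

Lemma box_props a x :
  (forall y, acc M x y -> eval M (FBox a) x <= eval M a y) /\
  (forall eps, 0 < eps -> exists y, acc M x y /\ eval M a y < eval M (FBox a) x + eps).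
Proof.
  destruct (ser x) as [y Hy].
  destruct (glb_fin (succset a x) (eval M a y) (- bnd (Defs.bound M) a)) as [H1 [_ H3]].
  exists y; auto.
  intros v [z [_ ->]]. pose proof (eval_bnd a z) as Z. apply Rabs_le_between in Z. lra.
  split.
  - intros z Hz. simpl. apply H1. exists z; auto.
  - intros eps Heps. destruct (H3 eps Heps) as [v [[z [Hz ->]] Hv]]. exists z. split; auto.
Qed.

Definition Ev (w : nat -> world M) : form -> nat -> R := fun f i => eval M f (w i).

Lemma sum_perm a L L' : Permutation L L' -> sum_lf a L = sum_lf a L'.
Proof. induction 1; simpl; lra. Qed.

Lemma sum_ext a b L : (forall lf, In lf L -> a (fst lf) (snd lf) = b (fst lf) (snd lf)) ->
  sum_lf a L = sum_lf b L.
Proof. induction L as [|x L IH]; intros H; simpl. auto. rewrite H, IH; auto. intros; apply H; simpl; auto. simpl; auto. Qed.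

Variables d e : R.

Definition gnode (w : nat -> world M) (n : node) : Prop :=
  match n with
  | Ineq G Gt D => d <= sum_lf (Ev w) G - sum_lf (Ev w) D
  | Ineq G Ge D => - e <= sum_lf (Ev w) G - sum_lf (Ev w) D
  | Rel i j => acc M (w i) (w j)
  end.

Definition good (B : branch) w := forall n, In n B -> gnode w n.

Lemma gnode_mono w G s D G' D' :
  sum_lf (Ev w) G - sum_lf (Ev w) D <= sum_lf (Ev w) G' - sum_lf (Ev w) D' ->
  gnode w (Ineq G s D) -> gnode w (Ineq G' s D').
Proof. destruct s; simpl; lra. Qed.

Definition upd (w : nat -> world M) j y : nat -> world M :=
  fun k => if Nat.eq_dec k j then y else w k.

Lemma gnode_upd w j y n : ~ In j (node_labels n) -> gnode w n -> gnode (upd w j y) n.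
Proof.
  intros Hj. destruct n as [G s D|i k]; simpl in *.
  - assert (HG : sum_lf (Ev (upd w j y)) G = sum_lf (Ev w) G).
    { apply sum_ext. intros lf Hlf. unfold Ev, upd. destruct Nat.eq_dec; auto.
      exfalso; apply Hj. apply in_or_app; left. subst. apply in_map; auto. }
    assert (HD : sum_lf (Ev (upd w j y)) D = sum_lf (Ev w) D).
    { apply sum_ext. intros lf Hlf. unfold Ev, upd. destruct Nat.eq_dec; auto.
      exfalso; apply Hj. apply in_or_app; right. subst. apply in_map; auto. }
    rewrite HG, HD. auto.
  - unfold upd. destruct Nat.eq_dec; [exfalso; apply Hj; auto|].
    destruct Nat.eq_dec; [exfalso; apply Hj; auto|]. auto.
Qed.

Lemma good_upd B w j y : fresh j B -> good B w -> good B (upd w j y).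
Proof. intros Hf Hg n Hn. apply gnode_upd; [apply (Hf n Hn) | auto]. Qed.

Lemma good_app N B w : good N w -> good B w -> good (N ++ B) w.
Proof. intros H1 H2 n Hn. apply in_app_or in Hn. destruct Hn; auto. Qed.

Lemma good_one n B w : gnode w n -> good B w -> good (n :: B) w.
Proof. intros H1 H2 m [<-|Hm]; auto. Qed.


Ltac fin Hg Hin Hp := eapply gnode_mono; [|apply (Hg _ Hin)]; rewrite (sum_perm _ _ _ Hp);
  unfold Ev in *; simpl; try (unfold Rmin); try (unfold Rmax); repeat destruct Rle_dec; lra.

Lemma in_labels_r lf G s D : In lf D -> In (snd lf) (node_labels (Ineq G s D)).
Proof. intros H. simpl. apply in_or_app. right. apply in_map; auto. Qed.

Lemma step_good B exts w : 0 < e -> step B exts -> good B w ->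
  exists N, In N exts /\ exists w', good (N ++ B) w'.
Proof.
  intros He Hs Hg.
  destruct Hs as [L G s D i Hin Hp|G s L D i Hin Hp|L G s D a b i Hin Hp|G s L D a b i Hin Hp
    |L G s D a b i Hin Hp|G s L D a b i Hin Hp|L G s D a b i Hin Hp|G s L D a b i Hin Hp
    |L G s D a b i Hin Hp|G s L D a b i Hin Hp|L G s D a i j Hr Hin Hp|G s L D a i j Hin Hp Hf
    |i k j Hr Hf].
  1-6: eexists; split; [left; reflexivity|]; exists w; apply good_app;
       [apply good_one; [|intros ? []] | assumption]; eapply gnode_mono; [|apply (Hg _ Hin)]; rewrite (sum_perm _ _ _ Hp);
  unfold Ev; simpl.
  all: try lra.
  - eexists; split; [left; reflexivity|]; exists w; apply good_app; [|assumption].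
    apply good_one; [|apply good_one; [|intros ? []]]; fin Hg Hin Hp.
  - destruct (Rle_dec (Ev w a i) (Ev w b i)).
    + eexists; split; [left; reflexivity|]; exists w; apply good_app;
       [apply good_one; [|intros ? []] | assumption]. fin Hg Hin Hp.
    + eexists; split; [right; left; reflexivity|]; exists w; apply good_app;
       [apply good_one; [|intros ? []] | assumption]. fin Hg Hin Hp.
  - destruct (Rle_dec (Ev w a i) (Ev w b i)).
    + eexists; split; [right; left; reflexivity|]; exists w; apply good_app;
       [apply good_one; [|intros ? []] | assumption]. fin Hg Hin Hp.
    + eexists; split; [left; reflexivity|]; exists w; apply good_app;
       [apply good_one; [|intros ? []] | assumption]. fin Hg Hin Hp.
  - eexists; split; [left; reflexivity|]; exists w; apply good_app; [|assumption].
    apply good_one; [|apply good_one; [|intros ? []]]; fin Hg Hin Hp.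
  -
    eexists; split; [left; reflexivity|]; exists w; apply good_app;
       [apply good_one; [|intros ? []] | assumption].
    pose proof (Hg _ Hr) as Ha. simpl in Ha. simpl. unfold Ev.
    pose proof (proj1 (box_props a (w i)) _ Ha). lra.
  -
    destruct (proj2 (box_props a (w i)) e He) as [y [Hy1 Hy2]].
    assert (Hij : i <> j).
    { intros ->. apply (Hf _ Hin). apply (in_labels_r (FBox a, j)).
      eapply Permutation_in. apply Permutation_sym; eauto. left; auto. }
    eexists; split; [left; reflexivity|]; exists (upd w j y); apply good_app;
      [|apply good_upd; auto].
    apply good_one; [|apply good_one; [|intros ? []]]; simpl; unfold Ev, upd;
      repeat destruct Nat.eq_dec; try congruence. lra.
  - destruct (ser (w k)) as [y Hy].
    assert (Hkj : k <> j).
    { intros ->. apply (Hf _ Hr). simpl. auto. }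
    eexists; split; [left; reflexivity|]; exists (upd w j y); apply good_app;
      [|apply good_upd; auto].
    apply good_one; [|intros ? []]. simpl; unfold upd;
      repeat destruct Nat.eq_dec; try congruence.
Qed.
End Core.

Lemma leaf M (ser : forall x : world M, exists y, acc M x y) d B : 0 < d -> branch_closed B ->
  (forall e, 0 < e -> exists w, good M d e B w) -> False.
Proof.
  intros Hd Hc H.
  assert (H' : forall n:nat, exists w, good M d (/(INR n+1)) B w).
  { intro n; apply H; apply inv_n_pos. }
  set (W := fun n => proj1_sig (constructive_indefinite_description _ (H' n))).
  assert (HW : forall n, good M d (/(INR n+1)) B (W n)).
  { intro n; unfold W; destruct constructive_indefinite_description; auto. }
  set (u := fun n (lf : lform) => eval M (fst lf) (W n (snd lf))).
  set (A := flat_map (fun n => match n with Ineq G _ D => G ++ D | Rel _ _ => [] end) B).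
  destruct (extract A u (fun lf => bnd (Defs.bound M) (fst lf))) as [phi [l [Hphi Hl]]].
  { intros n k. apply eval_bnd; auto. }
  apply Hc. exists (fun f i => l (f,i)). intros n Hn _.
  destruct n as [G s D|i j]; [|exact I].
  assert (HA : forall k, In k G \/ In k D -> In k A).
  { intros k Hk. apply in_flat_map. exists (Ineq G s D). split; auto. apply in_or_app; auto. }
  set (x := fun n => sum_lf (Ev M (W (phi n))) G - sum_lf (Ev M (W (phi n))) D).
  assert (Lim : is_lim_seq x (sum_lf (fun f i => l (f,i)) G - sum_lf (fun f i => l (f,i)) D)).
  { apply is_lim_seq_minus'.
    - apply (sum_lim G (fun n k => u (phi n) k) l). intros k Hk; apply Hl; apply HA; auto.
    - apply (sum_lim D (fun n k => u (phi n) k) l). intros k Hk; apply Hl; apply HA; auto. }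
  destruct s; simpl.
  - pose proof (is_lim_seq_le (fun _ => d) x d _ (fun n => HW (phi n) (Ineq G Gt D) Hn)
      (is_lim_seq_const d) Lim) as Hle. simpl in Hle. lra.
  - assert (Hb : forall n, - / (INR n + 1) <= x n).
    { intros n. pose proof (HW (phi n) (Ineq G Ge D) Hn) as Hn'. simpl in Hn'.
      pose proof (inv_n_anti n (phi n) (sincr_ge phi Hphi n)). unfold x. lra. }
    pose proof (proj1 (is_lim_seq_opp _ _) lim_inv_n) as L0.
    pose proof (is_lim_seq_le _ x _ _ Hb L0 Lim) as Hle. simpl in Hle. lra.
Qed.

Lemma pick_list {X : Type} (l : list X) (P : X -> R -> Prop) :
  (forall x e e', 0 < e -> e <= e' -> P x e -> P x e') ->
  (forall e, 0 < e -> exists x, In x l /\ P x e) ->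
  exists x, In x l /\ forall e, 0 < e -> P x e.
Proof.
  intros Hm. induction l as [|x l IH]; intros H.
  - destruct (H 1 Rlt_0_1) as [x [[] _]].
  - destruct (classic (forall e, 0 < e -> P x e)) as [Hx|Hx].
    + exists x. split; auto. left; auto.
    + apply not_all_ex_not in Hx. destruct Hx as [e0 He0].
      apply imply_to_and in He0. destruct He0 as [He0 Hn].
      destruct IH as [y [Hy HPy]].
      * intros e He. destruct (H (Rmin e e0)) as [z [[<-|Hz] HPz]].
        -- apply Rmin_glb_lt; auto.
        -- exfalso. apply Hn. eapply Hm; [|apply Rmin_r|exact HPz]. apply Rmin_glb_lt; auto.
        -- exists z. split; auto. eapply Hm; [|apply Rmin_l|exact HPz]. apply Rmin_glb_lt; auto.
      * exists y. split; auto. right; auto.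
Qed.

Lemma good_mono M d e e' B w : e <= e' -> good M d e B w -> good M d e' B w.
Proof.
  intros He H n Hn. specialize (H n Hn). destruct n as [G [|] D|i j]; simpl in *; auto; lra.
Qed.

Lemma main M (ser : forall x : world M, exists y, acc M x y) d : 0 < d ->
  forall B, closable B -> (forall e, 0 < e -> exists w, good M d e B w) -> False.
Proof.
  intros Hd B HB. induction HB as [B Hc|B exts Hs Hcl IH]; intros H.
  - eapply leaf; eauto.
  - destruct (pick_list exts (fun N e => exists w, good M d e (N ++ B) w)) as [N [HN HP]].
    + intros N e e' He He' [w Hw]. exists w. eapply good_mono; eauto.
    + intros e He. destruct (H e He) as [w Hw].
      destruct (step_good M ser d e B exts w He Hs Hw) as [N [HN [w' Hw']]].
      exists N. split; eauto.
    + eapply IH; eauto.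
Qed.

Theorem proposition3p4 : forall phi : form, LKA_derivable phi -> KA_valid phi.
Proof.
  intros phi H M x. apply Rnot_lt_le. intros Hlt.
  set (M' := smodel M).
  assert (Hx : eval M' phi (Some x) < 0).
  { unfold M'. rewrite (proj2 (eval_smodel M phi)). auto. }
  destruct (smodel_serial M (Some x)) as [y Hy].
  apply (main M' (smodel_serial M) (- eval M' phi (Some x))) with (B := root_branch phi).
  lra. exact H.
  intros e He. exists (fun k => if Nat.eq_dec k 2 then y else Some x).
  intros n [<-|[<-|[]]]; simpl.
  - unfold Ev. simpl. lra.
  - exact Hy.
Qed.
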